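(* Let $s\in(0,1)$, $d\ge1$ and let $B:=B_{\rho_0}(y_0)\subset\mathbb{R}^{1+d}$ be a half-parabolic ball. Let $S$ and $D$ be non-negative, monotone (with respect to inclusion) functions defined on the convex subsets of $B$. Assume that for every $n\in\mathbb{N}$ there is $C(n)>0$ such that for all half-parabolic balls $B_0,B_1,\dots,B_n\subset B$ with $B_0\subset\bigcup_{i=1}^nB_i$, $$S(B_0)\le C(n)\Big(\sum_{i=1}^nS(B_i)+D(B)\Big).$$ Then for any $\theta_0\in(0,1/2]$ and $\gamma>0$ there exists $\varepsilon=\varepsilon(\theta_0,\gamma,s,d,\rho_0)\in(0,1)$ such that, if for some $E\ge0$ $$\sigma^\gamma S(B_{\theta_0\sigma}(y))\le\varepsilon\,\sigma^\gamma S(B_\sigma(y))+E\quad\text{for all }B_\sigma(y)\subset B,$$ then for each $\theta\in(0,1)$ there is $C=C(d,\theta_0,\theta,\gamma,s,\rho_0)>0$ with $$\sigma^\gamma S(B_{\theta\sigma}(y))\le C\,(E+D(B))\quad\text{for all }B_\sigma(y)\subset B.$$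
   Context: Points of $\mathbb{R}^{1+d}$ are $x=(x_0,x_{1:d})$. For $r>0$ the half-parabolic ball is $B_r(x):=(x_0-r^{2s},x_0]\times B_r(x_{1:d})$, where $B_r(x_{1:d})$ is the open Euclidean ball in $\mathbb{R}^d$. *)

(* Defs.v *)
From HB Require Import structures.
From mathcomp Require Import all_boot all_order all_algebra.
From mathcomp Require Import all_classical all_reals.
From mathcomp Require Import exp.
Set Implicit Arguments. Unset Strict Implicit. Unset Printing Implicit Defensive.
Import Order.TTheory GRing.Theory Num.Theory.
Local Open Scope classical_set_scope.
Local Open Scope ring_scope.

Definition pt (R : realType) (d : nat) := (R * 'rV[R]_d)%type.

Definition hpball (R : realType) (d : nat) (s : R) (x : pt R d) (r : R)
  : set (pt R d) :=
  [set z : pt R d | x.1 - r `^ (2 * s) < z.1 /\ z.1 <= x.1 /\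
           \sum_(i < d) ((z.2 : 'rV[R]_d) ord0 i - (x.2 : 'rV[R]_d) ord0 i) ^+ 2 < r ^+ 2].

Definition convex_pt (R : realType) (d : nat) (A : set (pt R d)) : Prop :=
  forall p q, A p -> A q -> forall t : R, 0 <= t -> t <= 1 ->
    A (t * p.1 + (1 - t) * q.1, t *: p.2 + (1 - t) *: q.2).

(* Main.v *)
Set Warnings "-all".
Require Import Defs.
From HB Require Import structures.
From mathcomp Require Import all_boot all_order all_algebra.
From mathcomp Require Import all_classical all_reals.
From mathcomp Require Import exp.
From mathcomp Require Import ring lra.
Import Order.TTheory GRing.Theory Num.Theory.
Local Open Scope classical_set_scope.
Local Open Scope ring_scope.

Section H.
Variables (R : realType) (d : nat) (s : R).
Hypothesis s0 : 0 < s.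

Lemma pow2s_le (a b : R) : 0 <= a -> a <= b -> a `^ (2 * s) <= b `^ (2 * s).
Proof.
move=> a0 ab; apply: ge0_ler_powR => //; first by rewrite mulr_ge0 // ltW.
by rewrite nnegrE (le_trans a0 ab).
Qed.

Lemma hpball_le (x : pt R d) (r1 r2 : R) : 0 < r1 -> r1 <= r2 ->
  hpball s x r1 `<=` hpball s x r2.
Proof.
move=> r10 r12 z [h1 [h2 h3]]; split; [|split] => //.
  have := pow2s_le _ _ (ltW r10) r12; lra.
apply: (lt_le_trans h3); rewrite !expr2; nra.
Qed.

Lemma cvx_lt (L a b t : R) : L < a -> L < b -> 0 <= t -> t <= 1 -> L < t * a + (1 - t) * b.
Proof.
move=> la lb t0 t1; case: (ltrP 0 t) => ht.
  have : t * L < t * a by rewrite ltr_pM2l.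
  have : (1 - t) * L <= (1 - t) * b by rewrite ler_wpM2l ?subr_ge0 // ltW.
  lra.
have -> : t = 0 by lra.
lra.
Qed.

Lemma cvx_le (L a b t : R) : a <= L -> b <= L -> 0 <= t -> t <= 1 -> t * a + (1 - t) * b <= L.
Proof.
move=> la lb t0 t1.
have : t * a <= t * L by rewrite ler_wpM2l.
have : (1 - t) * b <= (1 - t) * L by rewrite ler_wpM2l ?subr_ge0.
lra.
Qed.

Lemma hpball_convex (x : pt R d) (r : R) : convex_pt (hpball s x r).
Proof.
move=> p q [p1 [p2 p3]] [q1 [q2 q3]] t t0 t1; split; [|split] => /=.
- exact: cvx_lt.
- exact: cvx_le.
- apply: (@le_lt_trans _ _ (t * (\sum_(i < d) (p.2 ord0 i - x.2 ord0 i) ^+ 2) +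
     (1 - t) * (\sum_(i < d) (q.2 ord0 i - x.2 ord0 i) ^+ 2))); last first.
    have : t * (\sum_(i < d) (p.2 ord0 i - x.2 ord0 i) ^+ 2) <= t * r ^+ 2.
      by rewrite ler_wpM2l // ltW.
    have : (1 - t) * (\sum_(i < d) (q.2 ord0 i - x.2 ord0 i) ^+ 2) <= (1 - t) * r ^+ 2.
      by rewrite ler_wpM2l // ?subr_ge0 // ltW.
    case: (ltrP 0 t) => ht.
      have : t * (\sum_(i < d) (p.2 ord0 i - x.2 ord0 i) ^+ 2) < t * r ^+ 2.
        by rewrite ltr_pM2l.
      lra.
    have -> : t = 0 by lra.
    lra.
  rewrite !mulr_sumr -big_split /=; apply: ler_sum => i _.
  rewrite !mxE !expr2.
  set a := p.2 ord0 i; set b := q.2 ord0 i; set c := x.2 ord0 i.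
  have h1 : 0 <= t * (1 - t) by rewrite mulr_ge0 // subr_ge0.
  have h2 : 0 <= (a - b) * (a - b) by rewrite -expr2 sqr_ge0.
  have : 0 <= t * (1 - t) * ((a - b) * (a - b)) by rewrite mulr_ge0.
  nra.
Qed.

Lemma sigma_le (y y0 : pt R d) (sigma rho0 : R) : 0 < sigma -> 0 < rho0 ->
  hpball s y sigma `<=` hpball s y0 rho0 -> sigma <= rho0.
Proof.
move=> sg r0 sub.
have key : forall t, 0 <= t -> t < sigma `^ (2 * s) -> t < rho0 `^ (2 * s).
  move=> t t0 tl.
  have : hpball s y sigma (y.1 - t, y.2).
    split; [|split] => /=; try lra.
    rewrite (eq_bigr (fun _ => 0)); last by move=> i _; rewrite subrr expr0n.
    by rewrite big1 // exprn_gt0.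
  move=> /sub [/= a [b _]].
  have : y.1 <= y0.1.
    have : hpball s y sigma y.
      split; [|split]; first by rewrite ltrBlDr ltrDl powR_gt0.
        by [].
      rewrite (eq_bigr (fun _ => 0)); last by move=> i _; rewrite subrr expr0n.
      by rewrite big1 // exprn_gt0.
    by move=> /sub [_ []].
  lra.
have : sigma `^ (2 * s) <= rho0 `^ (2 * s).
  rewrite leNgt; apply/negP => H.
  have := key (rho0 `^ (2 * s)) (powR_ge0 _ _) H; lra.
move=> H; rewrite leNgt; apply/negP => H1.
have : rho0 `^ (2 * s) < sigma `^ (2 * s).
  apply: (gt0_ltr_powR (r := 2 * s)); rewrite ?mulr_gt0 // nnegrE ltW //.
lra.
Qed.
End H.
Section H2.
Variables (R : realType).

Lemma cvx_sq (t u v : R) : 0 <= t -> t <= 1 ->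
  (t * u + (1 - t) * v) ^+ 2 <= t * u ^+ 2 + (1 - t) * v ^+ 2.
Proof.
move=> t0 t1.
have h1 : 0 <= t * (1 - t) by rewrite mulr_ge0 // subr_ge0.
have h2 : 0 <= (u - v) ^+ 2 by rewrite sqr_ge0.
have : 0 <= t * (1 - t) * (u - v) ^+ 2 by rewrite mulr_ge0.
rewrite !expr2 => h; nra.
Qed.

Lemma sq3 (th a b e : R) : 0 < th -> th < 1 ->
  (e + b + a) ^+ 2 <= th^-1 * e ^+ 2 + (2 / (1 - th)) * b ^+ 2 + (2 / (1 - th)) * a ^+ 2.
Proof.
move=> t0 t1.
have hx : (b + a) ^+ 2 <= 2 * b ^+ 2 + 2 * a ^+ 2.
  have : 0 <= (b - a) ^+ 2 by rewrite sqr_ge0.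
  rewrite !expr2; nra.
have := @cvx_sq th (e / th) ((b + a) / (1 - th)) (ltW t0) (ltW t1).
have -> : th * (e / th) + (1 - th) * ((b + a) / (1 - th)) = e + b + a.
  by field; apply/andP; split; rewrite ?subr_eq0; apply/negP => /eqP; lra.
have -> : th * (e / th) ^+ 2 + (1 - th) * ((b + a) / (1 - th)) ^+ 2 =
   th^-1 * e ^+ 2 + (1 - th)^-1 * (b + a) ^+ 2.
  by field; apply/andP; split; rewrite ?subr_eq0; apply/negP => /eqP; lra.
move=> h; apply: (le_trans h).
have i0 : 0 < (1 - th)^-1 by rewrite invr_gt0 subr_gt0.
have : (1 - th)^-1 * (b + a) ^+ 2 <= (1 - th)^-1 * (2 * b ^+ 2 + 2 * a ^+ 2).
  by rewrite ler_wpM2l // ltW.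
have -> : (1 - th)^-1 * (2 * b ^+ 2 + 2 * a ^+ 2) = 2 / (1 - th) * b ^+ 2 + 2 / (1 - th) * a ^+ 2 by field; rewrite subr_eq0; apply/negP => /eqP; lra.
lra.
Qed.
End H2.

Section Cover.
Variables (R : realType) (d : nat) (s : R).
Hypothesis s0 : 0 < s.

Lemma cover (theta lam : R) : 0 < theta -> theta < 1 -> 0 < lam -> lam <= 1 ->
  exists mu : R, [/\ 0 < mu, mu <= 1 & exists n : nat, forall (y : pt R d) (sigma : R), 0 < sigma ->
  exists c : nat -> pt R d,
   (forall i, hpball s (c i) (mu * sigma) `<=` hpball s y sigma) /\
   hpball s y (theta * sigma) `<=` \bigcup_(i in [set i | (1 <= i <= n)%N]) hpball s (c i) (lam * (mu * sigma))].
Proof.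
move=> th0 th1 l0 l1.
have s2 : 0 < 2 * s by rewrite mulr_gt0.
have tp1 : theta `^ (2 * s) < 1.
  have : theta `^ (2 * s) < 1 `^ (2 * s).
    by apply: gt0_ltr_powR; rewrite // nnegrE ltW.
  by rewrite powR1.
set X := 1 - theta `^ (2 * s).
have X0 : 0 < X by rewrite /X subr_gt0.
set mu := Num.min ((1 - theta) / 2) (X `^ (2 * s)^-1).
have mu0 : 0 < mu by rewrite lt_min; apply/andP; split; [lra| apply: powR_gt0].
have mu1 : mu <= (1 - theta) / 2 by rewrite ge_min lexx.
have mu2 : mu `^ (2 * s) <= X.
  have : mu <= X `^ (2 * s)^-1 by rewrite ge_min lexx orbT.
  move/(@pow2s_le _ _ s0 _ _ (ltW mu0)).
  by rewrite -powRrM mulVf ?powRr1 ?(ltW X0) // gt_eqF.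
exists mu; split => //; first lra.
pose D : R := (d.+1)%:R.
have D1 : 1 <= D by rewrite /D ler1n.
have dD : D = d%:R + 1 by rewrite /D -natr1.
clearbody D.
pose M := (Num.truncn (D / (lam * mu))).+1.
pose K := (Num.truncn (2 * theta `^ (2 * s) / (lam * mu) `^ (2 * s))).+1.
pose T : finType := ('I_K * {ffun 'I_d -> 'I_(2 * M).+1})%type.
exists #|{: T}| => y sigma sg0.
pose h := lam * mu * sigma / D.
pose tau := (lam * mu * sigma) `^ (2 * s) / 2.
pose cand (t : T) : pt R d := (y.1 - (t.1 : nat)%:R * tau,
   \row_j (y.2 ord0 j + h * ((t.2 j : nat)%:R - M%:R))).
pose candz t := if `[< hpball s (cand t) (mu * sigma) `<=` hpball s y sigma >] then cand t else y.
pose x0 : T := (ord0, [ffun => ord0]).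
have musg : 0 < mu * sigma by rewrite mulr_gt0.
have ymu : hpball s y (mu * sigma) `<=` hpball s y sigma.
  apply: hpball_le => //; have : mu <= 1 by lra.
  nra.
exists (fun i => nth y (map candz (enum T)) i.-1); split.
  move=> i; case: (ltnP i.-1 (size (enum T))) => hi.
    by rewrite (nth_map x0) // /candz; case: asboolP.
  rewrite nth_default; first exact: ymu.
  by rewrite size_map.
move=> p [hp1 [hp2 hp3]].
have D0 : 0 < D by lra.
have lm0 : 0 < lam * mu by rewrite mulr_gt0.
have L0 : 0 < lam * mu * sigma by rewrite mulr_gt0.
have h0 : 0 < h by rewrite /h divr_gt0.
have LDh : lam * mu * sigma = D * h.
  by rewrite /h; field; rewrite gt_eqF.
have Lp0 : 0 < (lam * mu * sigma) `^ (2 * s) by apply: powR_gt0.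
have tau0 : 0 < tau by rewrite /tau divr_gt0.
have Mh : sigma <= M%:R * h.
  have /andP[_ hM] := truncn_itv (ltW (divr_gt0 D0 lm0)).
  have -> : sigma = D / (lam * mu) * h.
    by rewrite /h; field; rewrite !gt_eqF.
  by rewrite ler_wpM2r // ltW.
pose xt := (y.1 - p.1) / tau.
have xt0 : 0 <= xt by rewrite /xt divr_ge0 // ?subr_ge0 // ltW.
pose kt := Num.truncn xt.
have [kt1 kt2] : kt%:R <= xt /\ xt < kt%:R + 1.
  by have /andP[] := truncn_itv xt0; rewrite -natr1.
have ytp : y.1 - p.1 = xt * tau by rewrite /xt; field; rewrite gt_eqF.
have ktK : (kt < K)%N.
  rewrite /K ltnS /kt truncn_le_nat.
  have Zeq : (theta * sigma) `^ (2 * s) / tau = 2 * theta `^ (2 * s) / (lam * mu) `^ (2 * s).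
    have a1 : 0 < sigma `^ (2 * s) by apply: powR_gt0.
    have a2 : 0 < lam `^ (2 * s) by apply: powR_gt0.
    have a3 : 0 < mu `^ (2 * s) by apply: powR_gt0.
    rewrite /tau !powRM ?(ltW th0) ?(ltW sg0) ?(ltW l0) ?(ltW mu0) ?(ltW lm0) //.
    by field; rewrite !gt_eqF.
  have Z0 : 0 <= 2 * theta `^ (2 * s) / (lam * mu) `^ (2 * s).
    by rewrite -Zeq divr_ge0 ?powR_ge0 // ltW.
  have /andP[_ hZ] := truncn_itv Z0.
  apply: lt_trans hZ; rewrite -Zeq /xt ltr_pM2r ?invr_gt0 //; lra.
have ej : forall j, - sigma < p.2 ord0 j - y.2 ord0 j < sigma.
  move=> j.
  have : (p.2 ord0 j - y.2 ord0 j) ^+ 2 <= \sum_(i < d) (p.2 ord0 i - y.2 ord0 i) ^+ 2.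
    by rewrite (bigD1 j) //= lerDl sumr_ge0 // => i _; rewrite sqr_ge0.
  have : (theta * sigma) ^+ 2 <= sigma ^+ 2.
    have a : 0 <= theta * sigma by rewrite mulr_ge0 // ltW.
    have b : theta * sigma <= sigma by rewrite ler_piMl // ?ltW.
    by rewrite !expr2; nra.
  move=> a b; apply/andP; split; rewrite !expr2 in a b hp3; nra.
pose q j := (p.2 ord0 j - y.2 ord0 j) / h.
have qe j : p.2 ord0 j - y.2 ord0 j = q j * h by rewrite /q; field; rewrite gt_eqF.
have qM j : - M%:R < q j < M%:R.
  have /andP[a b] := ej j; rewrite qe in a b.
  apply/andP; split; nra.
pose arg j := q j + M%:R + 2^-1.
have arg0 j : 0 <= arg j by have /andP[a b] := qM j; rewrite /arg; lra.
pose kf j := Num.truncn (arg j).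
have kfb j : (kf j)%:R <= arg j /\ arg j < (kf j)%:R + 1.
  by have /andP[] := truncn_itv (arg0 j); rewrite -natr1.
have kfM j : (kf j < (2 * M).+1)%N.
  rewrite ltnS /kf truncn_le_nat -natr1 natrM.
  have /andP[a b] := qM j; rewrite /arg; lra.
pose t : T := (inord kt, [ffun j => inord (kf j)]).
have t1 : (t.1 : nat) = kt by rewrite /= inordK.
have t2 j : (t.2 j : nat) = kf j by rewrite /= ffunE inordK.
have cand1 : (cand t).1 = y.1 - kt%:R * tau by rewrite /= t1.
have cand2 j : (cand t).2 ord0 j = y.2 ord0 j + h * ((kf j)%:R - M%:R).
  by rewrite /= mxE t2.
have bj j : ((cand t).2 ord0 j - p.2 ord0 j) ^+ 2 <= h ^+ 2 / 4.
  rewrite cand2.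
  have -> : y.2 ord0 j + h * ((kf j)%:R - M%:R) - p.2 ord0 j =
     h * ((kf j)%:R - arg j + 2^-1).
    have := qe j; rewrite /arg => e; lra.
  have [a b] := kfb j.
  set u := (kf j)%:R - arg j + 2^-1.
  have u1 : -(2^-1) < u by rewrite /u; lra.
  have u2 : u <= 2^-1 by rewrite /u; lra.
  have uu : u * u <= 4^-1.
    have : 0 <= (2^-1 - u) * (2^-1 + u) by rewrite mulr_ge0 //; lra.
    have -> : (4^-1 : R) = 2^-1 * 2^-1 by field.
    nra.
  have -> : (h * u) ^+ 2 = h ^+ 2 * (u * u) by rewrite expr2; ring.
  rewrite [_ / 4]mulrC -[X in _ <= X]mulrC; apply: ler_wpM2l => //.
  by rewrite sqr_ge0.
have Bs : \sum_(j < d) ((cand t).2 ord0 j - p.2 ord0 j) ^+ 2 <= d%:R * (h ^+ 2 / 4).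
  apply: le_trans (ler_sum _ (fun j _ => bj j)) _.
  by rewrite sumr_const card_ord mulr_natl.
have BsL : d%:R * (h ^+ 2 / 4) < (lam * mu * sigma) ^+ 2.
  rewrite LDh.
  have d0 : 0 <= (d%:R : R) by [].
  rewrite dD !expr2; nra.
have Lmu : lam * mu * sigma <= mu * sigma.
  rewrite -mulrA; have : 0 < mu * sigma by []. move=> a; nra.
have incl : hpball s (cand t) (mu * sigma) `<=` hpball s y sigma.
  move=> w [w1 [w2 w3]]; split; [|split].
  - have : (theta * sigma) `^ (2 * s) + (mu * sigma) `^ (2 * s) <= sigma `^ (2 * s).
      rewrite !powRM ?(ltW th0) ?(ltW sg0) ?(ltW mu0) //.
      have : mu `^ (2 * s) * sigma `^ (2 * s) <= X * sigma `^ (2 * s).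
        by rewrite ler_wpM2r ?powR_ge0.
      rewrite /X; lra.
    have : 0 <= kt%:R * tau by rewrite mulr_ge0 // ltW.
    have : kt%:R * tau <= xt * tau by rewrite ler_wpM2r // ltW.
    rewrite cand1 in w1; lra.
  - have : 0 <= kt%:R * tau by rewrite mulr_ge0 // ltW.
    rewrite cand1 in w2; lra.
  - pose e j := p.2 ord0 j - y.2 ord0 j.
    pose b j := (cand t).2 ord0 j - p.2 ord0 j.
    pose a j := w.2 ord0 j - (cand t).2 ord0 j.
    have -> : \sum_(i < d) (w.2 ord0 i - y.2 ord0 i) ^+ 2 = \sum_(i < d) (e i + b i + a i) ^+ 2.
      by apply: eq_bigr => i _; rewrite /e /b /a; congr (_ ^+ 2); ring.
    apply: (le_lt_trans (ler_sum _ (fun j _ => @sq3 _ theta (a j) (b j) (e j) th0 th1))).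
    rewrite !big_split /= -!mulr_sumr.
    have ie0 : 0 < theta^-1 by rewrite invr_gt0.
    have k0 : 0 < 2 / (1 - theta) by rewrite divr_gt0 // subr_gt0.
    have E1 : theta^-1 * (\sum_(i < d) e i ^+ 2) < theta^-1 * (theta * sigma) ^+ 2.
      by rewrite ltr_pM2l.
    have E1' : theta^-1 * (theta * sigma) ^+ 2 = theta * sigma ^+ 2.
      by field; rewrite gt_eqF.
    have E2 : 2 / (1 - theta) * (\sum_(i < d) b i ^+ 2) <= 2 / (1 - theta) * (mu * sigma) ^+ 2.
      apply: ler_wpM2l; first exact: ltW.
      apply: ltW; apply: le_lt_trans Bs _; apply: lt_le_trans BsL _.
      have : 0 <= lam * mu * sigma by exact: ltW.
      by rewrite !expr2 => z; nra.
    have E3 : 2 / (1 - theta) * (\sum_(i < d) a i ^+ 2) <= 2 / (1 - theta) * (mu * sigma) ^+ 2.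
      by apply: ler_wpM2l; [exact: ltW | exact: ltW].
    have E4 : 2 / (1 - theta) * (mu * sigma) ^+ 2 <= (1 - theta) / 2 * sigma ^+ 2.
      rewrite mulrAC ler_pdivrMr ?subr_gt0 //.
      have m1 : mu * sigma <= (1 - theta) / 2 * sigma by rewrite ler_wpM2r // ltW.
      have m0 : 0 <= mu * sigma by exact: ltW.
      have m2 : (mu * sigma) ^+ 2 <= ((1 - theta) / 2 * sigma) ^+ 2.
        by rewrite !expr2; nra.
      apply: le_trans (ler_wpM2l _ m2) _; first by [].
      by rewrite le_eqVlt; apply/orP; left; apply/eqP; field.
    rewrite E1' in E1; lra.
have A : hpball s (cand t) (lam * (mu * sigma)) p.
  rewrite mulrA; split; [|split].
  - have : xt * tau < (kt%:R + 1) * tau by rewrite ltr_pM2r.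
    rewrite mulrDl mul1r cand1.
    have : tau < (lam * mu * sigma) `^ (2 * s) by rewrite /tau; lra.
    lra.
  - have : kt%:R * tau <= xt * tau by rewrite ler_wpM2r // ltW.
    rewrite cand1; lra.
  - apply: le_lt_trans BsL; apply: le_trans _ Bs; rewrite le_eqVlt; apply/orP; left; apply/eqP.
    by apply: eq_bigr => i _; rewrite -sqrrN opprB.
exists (index t (enum T)).+1.
  by rewrite /= cardE index_mem mem_enum.
rewrite /= (nth_map x0) ?index_mem ?mem_enum // nth_index ?mem_enum //.
by rewrite /candz asboolT.
Qed.

End Cover.

Lemma sum_bound (R : realType) (d : nat) (s : R) (B : set (pt R d)) (S : set (pt R d) -> R) (Cn : nat -> R) (DB : R)
  (Hcov : forall (n : nat) (c : nat -> pt R d) (r : nat -> R),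
        (forall i, (i <= n)%N -> 0 < r i /\ hpball s (c i) (r i) `<=` B) ->
        hpball s (c 0%N) (r 0%N) `<=` \bigcup_(i in [set i | (1 <= i <= n)%N]) hpball s (c i) (r i) ->
        S (hpball s (c 0%N) (r 0%N)) <= Cn n * (\sum_(1 <= i < n.+1) S (hpball s (c i) (r i)) + DB))
  n (c : nat -> pt R d) (y : pt R d) (r0 r V : R) :
  0 <= Cn n -> 0 < r0 -> 0 < r -> hpball s y r0 `<=` B -> (forall i, hpball s (c i) r `<=` B) ->
  hpball s y r0 `<=` \bigcup_(i in [set i | (1 <= i <= n)%N]) hpball s (c i) r ->
  (forall i, (1 <= i <= n)%N -> S (hpball s (c i) r) <= V) ->
  S (hpball s y r0) <= Cn n * (n%:R * V + DB).
Proof.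
move=> C0 r00 rp yB cB cov SV.
pose c' i := if i == 0%N then y else c i.
pose r' i := if i == 0%N then r0 else r.
have H := Hcov n c' r'.
apply: le_trans (H _ _) _.
- by move=> i _; rewrite /c' /r'; case: (i == 0%N).
- move=> z /cov [i hi hz]; exists i => //.
  have : i != 0%N by move: hi => /andP[]; case: (i).
  by rewrite /c' /r' => /negbTE ->.
- apply: ler_wpM2l => //; rewrite lerD2r.
  rewrite (eq_big_nat _ _ (F2 := fun i => S (hpball s (c i) r))); last first.
    by move=> i /andP[hi _]; rewrite /c' /r'; case: i hi.
  apply: le_trans (ler_sum_nat (G := fun _ => V) _) _.
    by move=> i /andP[a b]; apply: SV; rewrite a -ltnS.
  by rewrite sumr_const_nat subn1 /= mulr_natl.
Qed.

Theorem lemma3p6 (R : realType) (s : R) (d : nat) (rho0 : R) (Cn : nat -> R) :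
  0 < s -> s < 1 -> (1 <= d)%N -> 0 < rho0 -> (forall n, 0 < Cn n) ->
  forall theta0 gamma : R, 0 < theta0 -> theta0 <= 2^-1 -> 0 < gamma ->
  exists eps : R, 0 < eps /\ eps < 1 /\
  forall theta : R, 0 < theta -> theta < 1 ->
  exists C : R, 0 < C /\
  forall (y0 : pt R d) (S D : set (pt R d) -> R) (E : R),
    let B := hpball s y0 rho0 in
    (* S, D non-negative on convex subsets of B *)
    (forall A, A `<=` B -> convex_pt A -> 0 <= S A /\ 0 <= D A) ->
    (* S, D monotone w.r.t. inclusion on convex subsets of B *)
    (forall A1 A2, A1 `<=` A2 -> A2 `<=` B -> convex_pt A1 -> convex_pt A2 ->
        S A1 <= S A2 /\ D A1 <= D A2) ->
    (* covering hypothesis with constants Cn n *)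
    (forall (n : nat) (c : nat -> pt R d) (r : nat -> R),
        (forall i, (i <= n)%N -> 0 < r i /\ hpball s (c i) (r i) `<=` B) ->
        hpball s (c 0%N) (r 0%N) `<=`
          \bigcup_(i in [set i | (1 <= i <= n)%N]) hpball s (c i) (r i) ->
        S (hpball s (c 0%N) (r 0%N)) <=
          Cn n * (\sum_(1 <= i < n.+1) S (hpball s (c i) (r i)) + D B)) ->
    0 <= E ->
    (forall (y : pt R d) (sigma : R), 0 < sigma -> hpball s y sigma `<=` B ->
        sigma `^ gamma * S (hpball s y (theta0 * sigma)) <=
          eps * sigma `^ gamma * S (hpball s y sigma) + E) ->
    forall (y : pt R d) (sigma : R), 0 < sigma -> hpball s y sigma `<=` B ->
      sigma `^ gamma * S (hpball s y (theta * sigma)) <= C * (E + D B).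
Proof.
move=> s0 s1 d1 r0 Cpos theta0 gamma t0 t0h g0.
have t01 : theta0 < 1 by lra.
have t00 : 0 < theta0 * theta0 by rewrite mulr_gt0.
have t001 : theta0 * theta0 <= 1 by nra.
have [mu1 [m10 m11 [n1 cov1]]] := @cover R d s s0 theta0 (theta0 * theta0) t0 t01 t00 t001.
pose C1 := Cn n1.
have C10 : 0 < C1 := Cpos n1.
pose a1 := mu1 `^ gamma.
have a10 : 0 < a1 by apply: powR_gt0.
have tg0 : 0 < theta0 `^ gamma by apply: powR_gt0.
have n10 : 0 <= (n1%:R : R) by [].
pose den := 2 * C1 * (n1%:R + 1) + a1.
have den0 : 0 < den.
  have : 0 <= 2 * C1 * (n1%:R + 1) by rewrite !mulr_ge0 // ?ltW //; lra.
  rewrite /den; lra.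
pose eps := a1 / den.
have eps0 : 0 < eps by rewrite /eps divr_gt0.
have eps1 : eps < 1.
  rewrite /eps ltr_pdivrMr // mul1r /den.
  have : 0 < 2 * C1 * (n1%:R + 1) by rewrite !mulr_gt0 //; lra.
  lra.
have epsC : C1 * n1%:R * eps <= a1 / 2.
  rewrite /eps mulrA ler_pdivrMr // /den.
  have : C1 * n1%:R * a1 * 2 <= 2 * C1 * (n1%:R + 1) * a1.
    have : 0 <= C1 * a1 by rewrite mulr_ge0 // ltW.
    move=> h; nra.
  have : 0 <= a1 * a1 by rewrite mulr_ge0 // ltW.
  move=> h1 h2.
  have -> : a1 / 2 * (2 * C1 * (n1%:R + 1) + a1) = C1 * (n1%:R + 1) * a1 + a1 * a1 / 2 by field.
  lra.
clearbody eps.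
exists eps; split => //; split => //.
move=> theta th0 th1.
have [mu2 [m20 m21 [n2 cov2]]] := @cover R d s s0 theta theta0 th0 th1 t0 (ltW t01).
pose K1 := C1 * (n1%:R / (theta0 `^ gamma * a1) + rho0 `^ gamma).
have rg0 : 0 < rho0 `^ gamma by apply: powR_gt0.
have K10 : 0 <= K1.
  rewrite /K1; apply: mulr_ge0; first exact: ltW.
  apply: addr_ge0; last exact: ltW.
  apply: divr_ge0 => //; apply: mulr_ge0; exact: ltW.
pose a2 := mu2 `^ gamma.
have a20 : 0 < a2 by apply: powR_gt0.
pose C := Cn n2 * (n2%:R * (2 * K1) / a2 + rho0 `^ gamma).
have C0 : 0 < C.
  rewrite /C; apply: mulr_gt0 => //.
  have : 0 <= n2%:R * (2 * K1) / a2.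
    by apply: divr_ge0; [apply: mulr_ge0 => //; apply: mulr_ge0 | exact: ltW].
  lra.
exists C; split => //.
move=> y0 S D E B Hpos Hmon Hcov E0 Heps.
have Bc : convex_pt B by exact: hpball_convex.
have DB0 : 0 <= D B by have [] := Hpos B (@subset_refl _ B) Bc.
have SB : forall z r, hpball s z r `<=` B -> 0 <= S (hpball s z r) /\ S (hpball s z r) <= S B.
  move=> z r H; split; first by have [] := Hpos _ H (@hpball_convex _ _ _ _ _).
  by have [] := Hmon _ _ H (@subset_refl _ B) (@hpball_convex _ _ _ _ _) Bc.
have powle : forall y sg, 0 < sg -> hpball s y sg `<=` B -> sg `^ gamma <= rho0 `^ gamma.
  move=> y sg sg0 H; apply: ge0_ler_powR; first exact: ltW.
  - by rewrite nnegrE ltW.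
  - by rewrite nnegrE ltW.
  - exact: (@sigma_le _ _ _ s0 _ _ _ _ sg0 r0 H).
have ballsub : forall y sg t, 0 < sg -> 0 < t -> t <= 1 -> hpball s y sg `<=` B -> hpball s y (t * sg) `<=` B.
  move=> y sg t sg0 tt0 t1 H; apply: subset_trans H; apply: hpball_le => //.
    by rewrite mulr_gt0.
  by rewrite ler_piMl // ltW.
pose A := [set v | exists y sg, [/\ 0 < sg, hpball s y sg `<=` B & v = sg `^ gamma * S (hpball s y (theta0 * sg))]].
have Aub : ubound A (rho0 `^ gamma * S B).
  move=> v [y [sg [sg0 sub ->]]].
  have [h1 h2] := SB _ _ (ballsub _ _ _ sg0 t0 (ltW t01) sub).
  apply: ler_pM => //; first exact: powR_ge0.
  exact: powle sub.
have An0 : A !=set0.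
  exists (rho0 `^ gamma * S (hpball s y0 (theta0 * rho0))), y0, rho0; split => //.
pose Q := sup A.
have AQ : forall v, A v -> v <= Q.
  by move=> v Av; apply: (ub_le_sup _ Av); exists (rho0 `^ gamma * S B).
have Q0 : 0 <= Q.
  have [v Av] := An0; apply: le_trans (AQ _ Av).
  case: Av => [y [sg [sg0 sub ->]]].
  have [h1 _] := SB _ _ (ballsub _ _ _ sg0 t0 (ltW t01) sub).
  by rewrite mulr_ge0 // powR_ge0.
have key : forall v, A v -> v <= Q / 2 + K1 * (E + D B).
  move=> v [y [sg [sg0 sub ->]]].
  have [c [cin ccov]] := cov1 y sg sg0.
  pose rho := mu1 * sg.
  pose r := theta0 * rho.
  have rho0' : 0 < rho by rewrite mulr_gt0.
  have rr : 0 < r by rewrite mulr_gt0.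
  have cB : forall i, hpball s (c i) rho `<=` B := fun i => subset_trans (cin i) sub.
  have crB : forall i, hpball s (c i) r `<=` B.
    by move=> i; apply: ballsub => //; exact: ltW.
  have crB2 : forall i, hpball s (c i) (theta0 * r) `<=` B.
    by move=> i; apply: ballsub => //; exact: ltW.
  rewrite -mulrA in ccov.
  have sg0' : 0 < sg `^ gamma by apply: powR_gt0.
  pose P := theta0 `^ gamma * a1 * sg `^ gamma.
  have P0 : 0 < P by rewrite /P !mulr_gt0.
  have rg : r `^ gamma = theta0 `^ gamma * rho `^ gamma by rewrite /r powRM ?ltW.
  have rP : r `^ gamma = P by rewrite rg /rho /P /a1 powRM ?ltW // mulrA.
  have Si : forall i, S (hpball s (c i) (theta0 * r)) <= (eps * theta0 `^ gamma * Q + E) / P.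
    move=> i; rewrite ler_pdivlMr //.
    have h1 := Heps (c i) r rr (crB i).
    have h2 : rho `^ gamma * S (hpball s (c i) r) <= Q by apply: AQ; exists (c i), rho; split => //.
    rewrite mulrC -rP; apply: le_trans h1 _.
    rewrite lerD2r rg -!mulrA; apply: ler_wpM2l; first exact: ltW.
    by apply: ler_wpM2l => //; exact: ltW.
  have Hs := @sum_bound R d s B S Cn (D B) Hcov n1 c y (theta0 * sg) (theta0 * r)
     ((eps * theta0 `^ gamma * Q + E) / P) (ltW C10) (mulr_gt0 t0 sg0) (mulr_gt0 t0 rr)
     (ballsub _ _ _ sg0 t0 (ltW t01) sub) crB2 ccov (fun i _ => Si i).
  apply: le_trans (ler_wpM2l (ltW sg0') Hs) _.
  pose w := C1 * n1%:R / (theta0 `^ gamma * a1).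
  have w0 : 0 <= w by rewrite /w divr_ge0 ?mulr_ge0 // ltW.
  have -> : sg `^ gamma * (Cn n1 * (n1%:R * ((eps * theta0 `^ gamma * Q + E) / P) + D B)) =
      (C1 * n1%:R * eps / a1) * Q + w * E + C1 * sg `^ gamma * D B.
    rewrite /P /w /C1; field.
    by rewrite !gt_eqF.
  have q1 : (C1 * n1%:R * eps / a1) * Q <= Q / 2.
    have : C1 * n1%:R * eps / a1 <= 2^-1.
      by rewrite ler_pdivrMr // [2^-1 * _]mulrC.
    move=> h; have := ler_wpM2r Q0 h; lra.
  have q2 : C1 * sg `^ gamma * D B <= C1 * rho0 `^ gamma * (E + D B).
    rewrite -!mulrA; apply: ler_wpM2l; first exact: ltW.
    have := powle _ _ sg0 sub => h.
    have : sg `^ gamma * D B <= rho0 `^ gamma * D B by apply: ler_wpM2r.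
    have : rho0 `^ gamma * D B <= rho0 `^ gamma * (E + D B).
      by apply: ler_wpM2l; [exact: ltW | lra].
    lra.
  have q3 : w * E <= w * (E + D B) by apply: ler_wpM2l => //; lra.
  have -> : K1 * (E + D B) = w * (E + D B) + C1 * rho0 `^ gamma * (E + D B).
    by rewrite /K1 /w; field; rewrite !gt_eqF.
  lra.
have QK : Q <= 2 * K1 * (E + D B).
  have : Q <= Q / 2 + K1 * (E + D B) by apply: ge_sup.
  lra.
have step1 : forall y sg, 0 < sg -> hpball s y sg `<=` B ->
   sg `^ gamma * S (hpball s y (theta0 * sg)) <= 2 * K1 * (E + D B).
  move=> y sg sg0 sub; apply: le_trans QK; apply: AQ; exists y, sg; split => //.
move=> y sg sg0 sub.
have [c [cin ccov]] := cov2 y sg sg0.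
pose rho := mu2 * sg.
have rho0' : 0 < rho by rewrite mulr_gt0.
have cB : forall i, hpball s (c i) rho `<=` B := fun i => subset_trans (cin i) sub.
have crB : forall i, hpball s (c i) (theta0 * rho) `<=` B.
  by move=> i; apply: ballsub => //; exact: ltW.
have sg0' : 0 < sg `^ gamma by apply: powR_gt0.
have rg : rho `^ gamma = a2 * sg `^ gamma by rewrite /rho powRM ?ltW.
have Si : forall i, S (hpball s (c i) (theta0 * rho)) <= 2 * K1 * (E + D B) / (a2 * sg `^ gamma).
  move=> i; rewrite ler_pdivlMr ?mulr_gt0 // mulrC -rg; exact: step1.
have Hs := @sum_bound R d s B S Cn (D B) Hcov n2 c y (theta * sg) (theta0 * rho)
  (2 * K1 * (E + D B) / (a2 * sg `^ gamma)) (ltW (Cpos n2)) (mulr_gt0 th0 sg0)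
  (mulr_gt0 t0 rho0') (ballsub _ _ _ sg0 th0 (ltW th1) sub) crB ccov (fun i _ => Si i).
apply: le_trans (ler_wpM2l (ltW sg0') Hs) _.
have -> : sg `^ gamma * (Cn n2 * (n2%:R * (2 * K1 * (E + D B) / (a2 * sg `^ gamma)) + D B)) =
   Cn n2 * (n2%:R * (2 * K1) / a2 * (E + D B) + sg `^ gamma * D B).
  by field; rewrite !gt_eqF.
have -> : C * (E + D B) = Cn n2 * ((n2%:R * (2 * K1) / a2 + rho0 `^ gamma) * (E + D B)).
  by rewrite /C; ring.
apply: ler_wpM2l; first exact: ltW (Cpos n2).
rewrite (mulrDl (n2%:R * (2 * K1) / a2)); apply: lerD => //.
have := powle _ _ sg0 sub => h.
have : sg `^ gamma * D B <= rho0 `^ gamma * D B by apply: ler_wpM2r.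
have : rho0 `^ gamma * D B <= rho0 `^ gamma * (E + D B).
  by apply: ler_wpM2l; [exact: ltW | lra].
lra.
Qed.
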